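(* Let $(k,|\cdot|)$ be a complete valued field and $\mu$ a probability measure with countable support on $\mathrm{SL}(2,k)$ with $\int\log\|\gamma\|\,d\mu(\gamma)<\infty$. Suppose that every element of the support of $\mu$, acting as a Möbius transformation, leaves the pair $\{0,\infty\}$ invariant, and at least one element of the support permutes $0$ and $\infty$. Then $\chi(\mu)=0$.
   Context: $\|\cdot\|$ is the operator norm on $\mathrm{SL}(2,k)$ for the max norm on $k^2$; $\chi(\mu)=\lim_n\frac1n\int\log\|\gamma\|\,d\mu^n(\gamma)$ with $\mu^n$ the $n$-th convolution power. Such elements are matrices $\mathrm{diag}(\alpha,\alpha^{-1})$ or $\begin{pmatrix}0&-\alpha\\\alpha^{-1}&0\end{pmatrix}$. *)

(* Defs.v *)
From HB Require Import structures.
From mathcomp Require Import all_boot all_order all_algebra.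
From mathcomp Require Import all_classical all_reals all_analysis.
Set Implicit Arguments. Unset Strict Implicit. Unset Printing Implicit Defensive.
Import Order.TTheory GRing.Theory Num.Theory numFieldNormedType.Exports.
Local Open Scope classical_set_scope.
Local Open Scope ring_scope.

Record absval (k : fieldType) (R : realType) := AbsVal {
  av :> k -> R;
  av_ge0 : forall x, 0 <= av x;
  av_eq0 : forall x, av x = 0 <-> x = 0;
  avM : forall x y, av (x * y) = av x * av y;
  av_triangle : forall x y, av (x + y) <= av x + av y }.

Definition av_complete (k : fieldType) (R : realType) (A : absval k R) : Prop :=
  forall u : nat -> k,
    (forall e : R, 0 < e -> exists N : nat, forall m n : nat,
        (N <= m)%N -> (N <= n)%N -> A (u m - u n) < e) ->
    exists l : k, (fun n => A (u n - l)) @ \oo --> (0 : R).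

Definition maxnorm (k : fieldType) (R : realType) (A : absval k R)
  (v : 'cV[k]_2) : R := Order.max (A (v ord0 ord0)) (A (v ord_max ord0)).

Definition opnorm (k : fieldType) (R : realType) (A : absval k R)
  (g : 'M[k]_2) : R :=
  sup [set maxnorm A (g *m v) / maxnorm A v | v in [set v : 'cV[k]_2 | v != 0]].

(* A probability measure with countable support on 2x2 matrices, given by
   its (point-mass) weight function p; its support is [set g | p g != 0]. *)
Definition discrete_prob (k : fieldType) (R : realType) (p : 'M[k]_2 -> R) : Prop :=
  [/\ forall g, 0 <= p g,
      countable [set g | p g != 0] &
      (\esum_(g in [set: 'M[k]_2]) (p g)%:E = 1)%E].

Definition conv (k : fieldType) (R : realType) (p q : 'M[k]_2 -> R)
  (g : 'M[k]_2) : R :=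
  fine (\esum_(x in [set x : 'M[k]_2 * 'M[k]_2 | x.1 *m x.2 = g])
          (p x.1 * q x.2)%:E).

Fixpoint convpow (k : fieldType) (R : realType) (p : 'M[k]_2 -> R) (n : nat)
  : 'M[k]_2 -> R :=
  match n with
  | 0 => fun g => if g == 1%:M then 1 else 0
  | n'.+1 => conv (convpow p n') p
  end.

Definition int_lognorm (k : fieldType) (R : realType) (A : absval k R)
  (q : 'M[k]_2 -> R) : \bar R :=
  \esum_(g in [set: 'M[k]_2]) (q g * ln (opnorm A g))%:E.

(* projective points: [z0 : z1]; 0 = [0:1], infinity = [1:0] *)
Definition pt0 (k : fieldType) : 'cV[k]_2 := \col_i (if i == ord0 then 0 else 1).
Definition ptinf (k : fieldType) : 'cV[k]_2 := \col_i (if i == ord0 then 1 else 0).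
Definition proj_eq (k : fieldType) (v w : 'cV[k]_2) : Prop :=
  exists c : k, c != 0 /\ v = c *: w.

(* Moebius action of g on P^1(k) is [v] |-> [g v] *)
Definition in0inf (k : fieldType) (v : 'cV[k]_2) : Prop :=
  proj_eq v (pt0 k) \/ proj_eq v (ptinf k).

Definition leaves_0inf (k : fieldType) (g : 'M[k]_2) : Prop :=
  in0inf (g *m pt0 k) /\ in0inf (g *m ptinf k).

Definition swaps_0inf (k : fieldType) (g : 'M[k]_2) : Prop :=
  proj_eq (g *m pt0 k) (ptinf k) /\ proj_eq (g *m ptinf k) (pt0 k).

(* Main.v *)
Require Import Defs.
From HB Require Import structures.
From mathcomp Require Import all_boot all_order all_algebra.
From mathcomp Require Import all_classical all_reals all_analysis.
From mathcomp Require Import ring lra.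
Import Order.TTheory GRing.Theory Num.Theory numFieldNormedType.Exports.
Set Implicit Arguments. Unset Strict Implicit. Unset Printing Implicit Defensive.
Local Open Scope classical_set_scope.
Local Open Scope ring_scope.

Section AV.
Variables (k : fieldType) (R : realType) (A : absval k R).

Lemma av0 : A 0 = 0. Proof. by apply/(av_eq0 A). Qed.
Lemma av1 : A 1 = 1.
Proof.
have h := avM A 1 1; rewrite mulr1 in h.
have n0 : A 1 != 0 by apply/eqP => /(av_eq0 A)/eqP; rewrite oner_eq0.
by apply/(mulIf n0); rewrite mul1r -h.
Qed.
Lemma avN1 : A (-1) = 1.
Proof.
have h := avM A (-1) (-1); rewrite mulrNN mulr1 av1 in h.
have ge := av_ge0 A (-1).
have : (A (-1) - 1) * (A (-1) + 1) = 0 by rewrite -subr_sqr expr2 -h expr1n subrr.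
move/eqP; rewrite mulf_eq0 => /orP[/eqP|/eqP]; first by move/subr0_eq.
move=> e; exfalso; lra.
Qed.
Lemma avN x : A (- x) = A x.
Proof. by rewrite -mulN1r avM avN1 mul1r. Qed.
Lemma av_gt0 x : x != 0 -> 0 < A x.
Proof.
move=> x0; rewrite lt_def av_ge0 andbT; apply/eqP => /(av_eq0 A) e.
by rewrite e eqxx in x0.
Qed.
Lemma avV x : x != 0 -> A (x^-1) = (A x)^-1.
Proof.
move=> x0; have h := avM A x (x^-1); rewrite mulfV // av1 in h.
have g := av_gt0 x0.
have n0 : A x != 0 by rewrite gt_eqF.
by apply/(mulfI n0); rewrite -h mulfV.
Qed.
End AV.

Section MX.
Variable (k : fieldType).
Notation i0 := (ord0 : 'I_2).
Notation i1 := (ord_max : 'I_2).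

Lemma mx2E m n (g : 'M[k]_(m,2)) (h : 'M[k]_(2,n)) i j : (g *m h) i j = g i i0 * h i0 j + g i i1 * h i1 j.
Proof.
rewrite mxE !big_ord_recl big_ord0 addr0.
by have -> : lift ord0 ord0 = ord_max :> 'I_2 by apply/val_inj.
Qed.

Lemma det2 (g : 'M[k]_2) : \det g = g i0 i0 * g i1 i1 - g i0 i1 * g i1 i0.
Proof.
rewrite (expand_det_row g ord0).
rewrite !big_ord_recl.
rewrite big_ord0 addr0 /cofactor.
have -> : lift ord0 ord0 = ord_max :> 'I_2 by apply/val_inj.
rewrite !det_mx11 !mxE /=.
have -> : lift ord0 ord0 = ord_max :> 'I_2 by apply/val_inj.
have -> : lift ord_max ord0 = ord0 :> 'I_2 by apply/val_inj.
rewrite expr0 expr1; ring.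
Qed.
End MX.

Section MaxR.
Variable R : realType.
Lemma mx_ubl (x y : R) : x <= Order.max x y. Proof. by rewrite le_max lexx. Qed.
Lemma mx_ubr (x y : R) : y <= Order.max x y. Proof. by rewrite le_max lexx orbT. Qed.
Lemma mx_lub (x y z : R) : x <= z -> y <= z -> Order.max x y <= z.
Proof. by move=> a b; rewrite ge_max a b. Qed.
Lemma mx10 : Order.max (1:R) 0 = 1. Proof. by rewrite max_l ?ler01. Qed.
Lemma mx01 : Order.max (0:R) 1 = 1. Proof. by rewrite max_r ?ler01. Qed.
End MaxR.

Section Good.
Variables (k : fieldType) (R : realType) (A : absval k R).
Notation i0 := (ord0 : 'I_2).
Notation i1 := (ord_max : 'I_2).

Definition good (g : 'M[k]_2) : Prop :=
  \det g = 1 /\ ((g i0 i1 = 0 /\ g i1 i0 = 0) \/ (g i0 i0 = 0 /\ g i1 i1 = 0)).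

Lemma good_cases g : good g ->
  (g i0 i1 = 0 /\ g i1 i0 = 0 /\ g i0 i0 * g i1 i1 = 1 /\ g i0 i0 != 0 /\ g i1 i1 != 0)
  \/ (g i0 i0 = 0 /\ g i1 i1 = 0 /\ g i0 i1 * g i1 i0 = -1 /\ g i0 i1 != 0 /\ g i1 i0 != 0).
Proof.
rewrite /good det2 => -[d [[e1 e2]|[e1 e2]]].
  left; rewrite e1 e2 mul0r subr0 in d; do 3!split => //.
  by split; apply/eqP => e; rewrite e ?mul0r ?mulr0 in d; move: d; apply/eqP; rewrite eq_sym oner_eq0.
right; rewrite e1 e2 mul0r sub0r in d; do 2!split => //.
split; first by rewrite -d opprK.
by split; apply/eqP => e; rewrite e ?mul0r ?mulr0 oppr0 in d; move: d; apply/eqP; rewrite eq_sym oner_eq0.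
Qed.

Lemma good1 : good 1%:M.
Proof.
split; first by rewrite det1.
by left; rewrite !mxE.
Qed.

Lemma good_mul a b : good a -> good b -> good (a *m b).
Proof.
move=> ga gb; split; first by rewrite det_mulmx (proj1 ga) (proj1 gb) mulr1.
rewrite !mx2E.
case: (good_cases ga) => [[-> [-> _]]|[-> [-> _]]];
case: (good_cases gb) => [[-> [-> _]]|[-> [-> _]]];
  rewrite ?mul0r ?mulr0 ?addr0 ?add0r; by [left|right].
Qed.

Lemma col_pt0 (g : 'M[k]_2) i : (g *m pt0 k) i ord0 = g i i1.
Proof. by rewrite mx2E !mxE /= mulr0 add0r mulr1. Qed.
Lemma col_ptinf (g : 'M[k]_2) i : (g *m ptinf k) i ord0 = g i i0.
Proof. by rewrite mx2E !mxE /= mulr0 addr0 mulr1. Qed.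

Lemma good_of (g : 'M[k]_2) : \det g = 1 -> leaves_0inf g -> good g.
Proof.
move=> d [h1 h2]; split => //.
have E1 : g i0 i1 = 0 \/ g i1 i1 = 0.
  case: h1 => [[c [_ e]]|[c [_ e]]]; [left|right];
  by rewrite -(col_pt0 g) e !mxE /= mulr0.
have E2 : g i0 i0 = 0 \/ g i1 i0 = 0.
  case: h2 => [[c [_ e]]|[c [_ e]]]; [left|right];
  by rewrite -(col_ptinf g) e !mxE /= mulr0.
move: d; rewrite det2.
case: E1 => e1; case: E2 => e2; rewrite e1 e2 ?mul0r ?mulr0 ?subr0 ?sub0r ?oppr0.
- by move/eqP; rewrite eq_sym oner_eq0.
- by left.
- by right.
- by move/eqP; rewrite eq_sym oner_eq0.
Qed.

Lemma swap_entry (g : 'M[k]_2) : good g -> swaps_0inf g -> g i0 i1 != 0.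
Proof.
move=> gg [_ [c [_ e]]].
have : g i0 i0 = 0 by rewrite -(col_ptinf g) e !mxE /= mulr0.
move=> e00; case: (good_cases gg) => [[_ [_ [_ [n _]]]]|[_ [_ [_ [n _]]]]] //.
by rewrite e00 eqxx in n.
Qed.

Definition r0 (g : 'M[k]_2) := A (g i0 i0) + A (g i0 i1).
Definition r1 (g : 'M[k]_2) := A (g i1 i0) + A (g i1 i1).
Definition ell (g : 'M[k]_2) := ln (r0 g).
Definition sg (g : 'M[k]_2) : R := if g i0 i1 == 0 then 1 else -1.

Lemma r0_gt0 g : good g -> 0 < r0 g.
Proof.
rewrite /r0 => gg; case: (good_cases gg) => [[e1 [_ [_ [n _]]]]|[e1 [_ [_ [n _]]]]].
  by rewrite e1 (av0 A) addr0 av_gt0.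
by rewrite e1 (av0 A) add0r av_gt0.
Qed.

Lemma r01 g : good g -> r0 g * r1 g = 1.
Proof.
rewrite /r0 /r1 => gg; case: (good_cases gg) => [[e1 [e2 [d _]]]|[e1 [e2 [d _]]]].
  by rewrite e1 e2 !(av0 A) addr0 add0r -avM d av1.
by rewrite e1 e2 !(av0 A) addr0 add0r mulrC -avM mulrC d avN1.
Qed.

Lemma r1E g : good g -> r1 g = (r0 g)^-1.
Proof.
move=> gg; have h := r01 gg; have n0 : r0 g != 0 by rewrite gt_eqF ?r0_gt0.
by apply/(mulfI n0); rewrite h mulfV.
Qed.

Lemma sg_mul a b : good a -> good b -> sg (a *m b) = sg a * sg b.
Proof.
move=> ga gb; rewrite /sg mx2E.
case: (good_cases ga) => [[e1 [e2 [_ [n1 n2]]]]|[e1 [e2 [_ [n1 n2]]]]];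
case: (good_cases gb) => [[f1 [f2 [_ [m1 m2]]]]|[f1 [f2 [_ [m1 m2]]]]];
rewrite ?e1 ?e2 ?f1 ?f2 ?eqxx ?(negPf n1) ?(negPf m1) ?mul0r ?mulr0 ?addr0 ?add0r ?eqxx
  ?mulf_eq0 ?(negPf n1) ?(negPf n2) ?(negPf m1) ?(negPf m2) /= ?mul1r ?mulr1 ?mulrNN //; by rewrite mulr1.
Qed.

Lemma ell_mul a b : good a -> good b -> ell (a *m b) = ell a + sg a * ell b.
Proof.
move=> ga gb; rewrite /ell.
have p0 := r0_gt0 ga; have p1 := r0_gt0 gb.
case: (good_cases ga) => [[e1 [e2 [_ [n1 n2]]]]|[e1 [e2 [_ [n1 n2]]]]].
- have -> : r0 (a *m b) = r0 a * r0 b.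
    by rewrite /r0 !mx2E e1 ?e2 !mul0r !addr0 !avM (av0 A) addr0 mulrDr.
  by rewrite lnM ?posrE // /sg e1 eqxx mul1r.
- have -> : r0 (a *m b) = r0 a * r1 b.
    by rewrite /r0 /r1 !mx2E e1 ?e2 !mul0r !add0r !avM (av0 A) add0r mulrDr.
  by rewrite r1E // lnM ?posrE ?invr_gt0 // lnV ?posrE // /sg (negPf n1) mulN1r.
Qed.

Lemma maxnorm_gt0 (v : 'cV[k]_2) : v != 0 -> 0 < maxnorm A v.
Proof.
move=> v0; rewrite /maxnorm lt_max.
have : v ord0 ord0 != 0 \/ v ord_max ord0 != 0.
  case: (eqVneq (v ord0 ord0) 0) => e0; last by left.
  case: (eqVneq (v ord_max ord0) 0) => e1; last by right.
  exfalso; move/eqP: v0; apply; apply/matrixP => i j.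
  rewrite !mxE; have -> : j = ord0 by apply/val_inj; case: j => -[].
  by case: i => -[|[|//]] ? ; [rewrite -e0|rewrite -e1]; congr (v _ _); apply/val_inj.
by case=> h; apply/orP; [left|right]; apply av_gt0.
Qed.

Lemma row_bound (g : 'M[k]_2) (v : 'cV[k]_2) i :
  A ((g *m v) i ord0) <= (A (g i i0) + A (g i i1)) * maxnorm A v.
Proof.
rewrite mx2E; apply: le_trans (av_triangle _ _ _) _.
rewrite !avM mulrDl lerD // ler_wpM2l ?av_ge0 // /maxnorm; [apply: mx_ubl|apply: mx_ubr].
Qed.

Lemma opnormE g : good g -> opnorm A g = Num.max (r0 g) (r1 g).
Proof.
move=> gg; rewrite /opnorm; set E := [set _ | _ in _].
have ub : ubound E (Num.max (r0 g) (r1 g)).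
  move=> _ [v /= v0 <-]; have mp := maxnorm_gt0 v0.
  rewrite ler_pdivrMr //.
  rewrite {1}/maxnorm; apply: mx_lub.
    apply: le_trans (row_bound g v i0) _; apply: ler_wpM2r; [exact: ltW|apply: mx_ubl].
  apply: le_trans (row_bound g v i1) _; apply: ler_wpM2r; [exact: ltW|apply: mx_ubr].
have hub : has_ubound E by exists (Num.max (r0 g) (r1 g)).
have inf0 : ptinf k != 0.
  by apply/eqP => /matrixP /(_ ord0 ord0); rewrite !mxE /= => /eqP; rewrite oner_eq0.
have p00 : pt0 k != 0.
  by apply/eqP => /matrixP /(_ ord_max ord0); rewrite !mxE /= => /eqP; rewrite oner_eq0.
have Einf : E (Num.max (A (g i0 i0)) (A (g i1 i0))).
  exists (ptinf k) => //; rewrite /maxnorm !col_ptinf !mxE /= av1 (av0 A).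
  by rewrite mx10 divr1.
have E0 : E (Num.max (A (g i0 i1)) (A (g i1 i1))).
  exists (pt0 k) => //; rewrite /maxnorm !col_pt0 !mxE /= av1 (av0 A).
  by rewrite mx01 divr1.
apply/eqP; rewrite eq_le; apply/andP; split; first by apply: ge_sup => //; exists (Num.max (A (g i0 i0)) (A (g i1 i0))).
have s1 := ub_le_sup hub Einf; have s2 := ub_le_sup hub E0.
rewrite /r0 /r1.
case: (good_cases gg) => [[e1 [e2 _]]|[e1 [e2 _]]]; rewrite e1 e2 (av0 A) ?addr0 ?add0r.
- apply: mx_lub; [apply: le_trans s1|apply: le_trans s2]; [apply: mx_ubl|apply: mx_ubr].
- apply: mx_lub; [apply: le_trans s2|apply: le_trans s1]; [apply: mx_ubl|apply: mx_ubr].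
Qed.

Lemma ln_max_inv (r : R) : 0 < r -> ln (Num.max r r^-1) = `|ln r|.
Proof.
move=> r0; case: (lerP 1 r) => h.
  rewrite max_l; last by apply: le_trans (h); rewrite invf_le1.
  by rewrite ger0_norm // ln_ge0.
rewrite max_r; last by apply: le_trans (ltW h) _; rewrite invf_ge1 // ltW.
rewrite lnV ?posrE // ltr0_norm //.
have : ln r < ln 1 by rewrite ltr_ln ?posrE.
by rewrite ln1.
Qed.

Lemma ln_opnorm g : good g -> ln (opnorm A g) = `|ell g|.
Proof. by move=> gg; rewrite opnormE // r1E // ln_max_inv // r0_gt0. Qed.

Lemma ell1 : ell 1%:M = 0.
Proof. by rewrite /ell /r0 !mxE /= av1 (av0 A) addr0 ln1. Qed.
Lemma sg1 : sg 1%:M = 1.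
Proof. by rewrite /sg !mxE /= eqxx. Qed.

End Good.

Section EsumExtra.
Variables (R : realType) (T : choiceType).
Local Open Scope ereal_scope.

Lemma fsum_le_esum (D X : set T) (f : T -> \bar R) : finite_set X -> X `<=` D ->
  \sum_(i \in X) f i <= \esum_(x in D) f x.
Proof. by move=> fX XD; apply: ereal_sup_ubound; exists X. Qed.

Lemma esumZ_le (c : R) (D : set T) (f : T -> \bar R) : (0 <= c)%R ->
  (forall x, D x -> 0 <= f x) ->
  \esum_(x in D) (c%:E * f x) <= c%:E * \esum_(x in D) f x.
Proof.
move=> c0 f0; apply: ge_ereal_sup => _ [X [finX XD] <-].
have -> : \sum_(x \in X) (c%:E * f x) = c%:E * \sum_(x \in X) f x.
  rewrite !fsbig_finite // big_seq [in RHS]big_seq ge0_sume_distrr //.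
  by move=> i; rewrite in_fset_set // inE => /XD /f0.
apply: lee_wpmul2l; first by rewrite lee_fin.
exact: fsum_le_esum.
Qed.

Lemma esumZ (c : R) (D : set T) (f : T -> \bar R) : (0 <= c)%R ->
  (forall x, D x -> 0 <= f x) ->
  \esum_(x in D) (c%:E * f x) = c%:E * \esum_(x in D) f x.
Proof.
move=> c0 f0; case: (eqVneq c 0%R) => [->|cn0].
  by rewrite mul0e esum1 // => x _; rewrite mul0e.
have cp : (0 < c)%R by rewrite lt_def cn0.
apply/eqP; rewrite eq_le esumZ_le //=.
have ci : (0 <= c^-1)%R by rewrite invr_ge0.
have h := @esumZ_le (c^-1) D (fun x => c%:E * f x) ci.
have h' : forall x, D x -> 0 <= c%:E * f x by move=> x Dx; rewrite mule_ge0 // ?lee_fin // f0.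
have := h h'.
under eq_esum do rewrite muleA -EFinM mulVf // mul1e.
move=> /(lee_wpmul2l (x := c%:E)); rewrite lee_fin => /(_ c0).
by rewrite muleA -EFinM mulfV // mul1e.
Qed.

Lemma esumZr (c : R) (D : set T) (f : T -> \bar R) : (0 <= c)%R ->
  (forall x, D x -> 0 <= f x) ->
  \esum_(x in D) (f x * c%:E) = (\esum_(x in D) f x) * c%:E.
Proof.
by move=> c0 f0; rewrite [RHS]muleC -esumZ //; apply: eq_esum => x _; exact: muleC.
Qed.

Lemma esum_subset (D E : set T) (f : T -> \bar R) : D `<=` E ->
  (forall x, E x -> 0 <= f x) -> \esum_(x in D) f x <= \esum_(x in E) f x.
Proof.
move=> DE f0; apply: ge_ereal_sup => _ [X [finX XD] <-].
apply: fsum_le_esum => //; exact: subset_trans DE.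
Qed.

Lemma esum_one (t : T) (f : T -> \bar R) : (forall x, x != t -> f x = 0) ->
  0 <= f t -> \esum_(x in setT) f x = f t.
Proof.
move=> f0 ft; rewrite (esumID [set t]); last first.
  by move=> x _; case: (eqVneq x t) => [->//|/f0 ->].
rewrite setTI esum_set1 // esum1 ?adde0 // => x [_ /= xt].
by apply: f0; apply/eqP.
Qed.
End EsumExtra.

Section Conv.
Variables (k : fieldType) (R : realType).
Local Notation M := 'M[k]_2.
Local Open Scope ereal_scope.

Definition fib (g : M) := [set x : M * M | x.1 *m x.2 = g].

Lemma esum_pairs (F : M * M -> \bar R) : (forall x, 0 <= F x) ->
  \esum_(x in setT) F x = \esum_(a in setT) \esum_(b in setT) F (a, b).
Proof.
move=> F0; rewrite esum_esum //.
have -> : [set: M] `*`` (fun _ => [set: M]) = setT by apply/seteqP; split.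
by apply: eq_esum => -[a b].
Qed.

Lemma esum_fib (F : M * M -> \bar R) : (forall x, 0 <= F x) ->
  \esum_(g in setT) \esum_(x in fib g) F x = \esum_(x in setT) F x.
Proof.
move=> F0; rewrite esum_esum //.
rewrite (reindex_esum setT _ (fun x : M * M => (x.1 *m x.2, x))) //.
split.
- by move=> x _ /=; split.
- by move=> x y _ _ [].
- move=> [g x] [_ /= fx]; exists x => //=; by rewrite fx.
Qed.

Lemma esum_mass (P q : M -> R) : (forall g, 0 <= P g)%R -> (forall g, 0 <= q g)%R ->
  \esum_(g in setT) (q g)%:E = 1 ->
  \esum_(a in setT) \esum_(b in setT) (P a * q b)%:E = \esum_(a in setT) (P a)%:E.
Proof.
move=> P0 q0 q1; apply: eq_esum => a _.
under eq_esum do rewrite EFinM.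
by rewrite esumZ // ?q1 ?mule1 // => b _; rewrite lee_fin.
Qed.

Lemma conv_ge0 (P q : M -> R) (g : M) : (forall g, 0 <= P g)%R -> (forall g, 0 <= q g)%R ->
  (0 <= Defs.conv P q g)%R.
Proof.
move=> P0 q0; apply: fine_ge0; apply: esum_ge0 => x _.
by rewrite lee_fin mulr_ge0.
Qed.

Lemma conv_supp (P q : M -> R) (g : M) : Defs.conv P q g != 0%R ->
  exists a b, a *m b = g /\ P a != 0%R /\ q b != 0%R.
Proof.
move=> h; apply: contra_notP (negP h) => H; apply/eqP.
rewrite /Defs.conv esum1 // => -[a b] /= e.
case: (eqVneq (P a) 0%R) => [->|Pa]; first by rewrite mul0r.
case: (eqVneq (q b) 0%R) => [->|qb]; first by rewrite mulr0.
by exfalso; apply: H; exists a, b.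
Qed.

Lemma conv_eq (P q h : M -> R) : (forall g, 0 <= P g)%R -> (forall g, 0 <= q g)%R ->
  (forall g, 0 <= h g)%R ->
  \esum_(g in setT) (P g)%:E = 1 -> \esum_(g in setT) (q g)%:E = 1 ->
  \esum_(g in setT) (Defs.conv P q g * h g)%:E =
  \esum_(a in setT) \esum_(b in setT) (P a * q b * h (a *m b))%:E.
Proof.
move=> P0 q0 h0 P1 q1.
have F0 : forall x : M * M, 0 <= (P x.1 * q x.2)%:E by move=> x; rewrite lee_fin mulr_ge0.
have fin : forall g, \esum_(x in fib g) (P x.1 * q x.2)%:E \is a fin_num.
  move=> g; rewrite ge0_fin_numE; last by apply: esum_ge0.
  apply: (@le_lt_trans _ _ (\esum_(x in setT) (P x.1 * q x.2)%:E)).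
    by apply: esum_subset.
  by rewrite esum_pairs //= esum_mass // P1 ltry.
transitivity (\esum_(g in setT) \esum_(x in fib g) (P x.1 * q x.2 * h (x.1 *m x.2))%:E).
  apply: eq_esum => g _.
  rewrite /Defs.conv EFinM fineK; last exact: fin.
  rewrite -esumZr; [|exact: h0|by move=> x _; exact: F0].
  by apply: eq_esum => x /= ->; rewrite EFinM.
rewrite esum_fib; last by move=> x; rewrite lee_fin !mulr_ge0.
by rewrite esum_pairs //; move=> x; rewrite lee_fin !mulr_ge0.
Qed.

Section Pow.
Variables (A : absval k R) (p : M -> R).
Hypotheses (p0 : forall g, (0 <= p g)%R) (p1 : \esum_(g in setT) (p g)%:E = 1)
  (pg : forall g, p g != 0%R -> good g).

Lemma convpow_inv n : (forall g, (0 <= convpow p n g)%R) /\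
  \esum_(g in setT) (convpow p n g)%:E = 1 /\ (forall g, convpow p n g != 0%R -> good g).
Proof.
elim: n => [|n [P0 [P1 Pg]]].
  split; first by move=> g /=; case: ifP.
  split.
    rewrite (esum_one (t := 1%:M)) /= ?eqxx //.
    by move=> x /negPf /= ->.
  by move=> g /=; case: ifP => [/eqP -> _|]; [exact: good1|rewrite eqxx].
split; first by move=> g; apply: conv_ge0.
split.
  have := @conv_eq (convpow p n) p (fun _ => 1%R) P0 p0 (fun _ => ler01) P1 p1.
  under eq_esum do rewrite mulr1.
  move=> -> /=.
  under eq_esum do under eq_esum do rewrite mulr1.
  by rewrite esum_mass.
move=> g /conv_supp [a [b [<- [Pa pb]]]].
by apply: good_mul; [apply: Pg|apply: pg].
Qed.
End Pow.
End Conv.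

Section Expect.
Variables (R : realType) (T : choiceType) (w : T -> R).
Hypotheses (w0 : forall x, 0 <= w x) (w1 : (\esum_(x in setT) (w x)%:E = 1)%E).

Definition fin (f : T -> R) := (\esum_(x in setT) (w x * f x)%:E < +oo)%E.
Definition FS (f : T -> R) := fine (\esum_(x in setT) (w x * f x)%:E).
Definition posp (x : R) := (x + `|x|) / 2.
Definition negp (x : R) := (`|x| - x) / 2.
Definition integ (f : T -> R) := fin (fun x => `|f x|).
Definition Ex (f : T -> R) := FS (fun x => posp (f x)) - FS (fun x => negp (f x)).

Lemma nrm_b (x : R) : x <= `|x| /\ - x <= `|x|.
Proof. by split; [exact: ler_norm|rewrite -normrN; exact: ler_norm]. Qed.

Lemma posp_ge0 x : 0 <= posp x.
Proof. rewrite /posp; have := nrm_b x; lra. Qed.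
Lemma negp_ge0 x : 0 <= negp x.
Proof. rewrite /negp; have := nrm_b x; lra. Qed.
Lemma pospE x : posp x - negp x = x.
Proof. rewrite /posp /negp; lra. Qed.
Lemma posp_le_abs x : posp x <= `|x|.
Proof. rewrite /posp; have := nrm_b x; lra. Qed.
Lemma negp_le_abs x : negp x <= `|x|.
Proof. rewrite /negp; have := nrm_b x; lra. Qed.


Lemma fin_le (f g : T -> R) : (forall x, 0 <= f x <= g x)%R -> fin g -> fin f.
Proof.
move=> fg; rewrite /fin; apply: le_lt_trans; apply: le_esum => x _.
rewrite lee_fin ler_wpM2l //; by case/andP: (fg x).
Qed.

Lemma FS_esum (f : T -> R) : (forall x, 0 <= f x)%R -> fin f ->
  (\esum_(x in setT) (w x * f x)%:E = (FS f)%:E)%E.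
Proof.
move=> f0 ff; rewrite /FS fineK // ge0_fin_numE //.
by apply: esum_ge0 => x _; rewrite lee_fin mulr_ge0.
Qed.

Lemma FS_ge0 (f : T -> R) : (forall x, 0 <= f x)%R -> (0 <= FS f)%R.
Proof. by move=> f0; apply: fine_ge0; apply: esum_ge0 => x _; rewrite lee_fin mulr_ge0. Qed.

Lemma fin_add (f g : T -> R) : (forall x, 0 <= f x)%R -> (forall x, 0 <= g x)%R ->
  fin f -> fin g -> fin (fun x => f x + g x) /\ FS (fun x => f x + g x) = (FS f + FS g)%R.
Proof.
move=> f0 g0 ff fg.
have e : (\esum_(x in setT) (w x * (f x + g x))%:E = (FS f + FS g)%:E)%E.
  under eq_esum do rewrite mulrDr EFinD.
  rewrite esumD; last 2 first.
    by move=> x _; rewrite lee_fin mulr_ge0.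
    by move=> x _; rewrite lee_fin mulr_ge0.
  by rewrite !FS_esum.
by split; [rewrite /fin e ltry|rewrite /FS e].
Qed.

Lemma fin_scale (c : R) (f : T -> R) : (0 <= c)%R -> (forall x, 0 <= f x)%R ->
  fin f -> fin (fun x => c * f x) /\ FS (fun x => c * f x) = (c * FS f)%R.
Proof.
move=> c0 f0 ff.
have e : (\esum_(x in setT) (w x * (c * f x))%:E = (c * FS f)%:E)%E.
  under eq_esum do rewrite mulrCA EFinM.
  rewrite esumZ //; last by move=> x _; rewrite lee_fin mulr_ge0.
  by rewrite FS_esum // EFinM.
by split; [rewrite /fin e ltry|rewrite /FS e].
Qed.

Lemma fin_const (c : R) : (0 <= c)%R -> fin (fun _ => c) /\ FS (fun _ => c) = c.
Proof.
move=> c0.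
have e : (\esum_(x in setT) (w x * c)%:E = c%:E)%E.
  under eq_esum do rewrite EFinM.
  by rewrite esumZr // ?w1 ?mul1e // => x _; rewrite lee_fin.
by split; [rewrite /fin e ltry|rewrite /FS e].
Qed.

Lemma FS_le (f g : T -> R) : (forall x, 0 <= f x <= g x)%R -> fin g -> (FS f <= FS g)%R.
Proof.
move=> fg gg; have ff := fin_le fg gg.
have f0 : (forall x, 0 <= f x)%R by move=> x; case/andP: (fg x).
have g0 : (forall x, 0 <= g x)%R by move=> x; case/andP: (fg x) => a b; apply: le_trans b.
rewrite -lee_fin -!FS_esum //; apply: le_esum => x _.
by rewrite lee_fin ler_wpM2l //; case/andP: (fg x).
Qed.

Lemma FS_ext (f g : T -> R) : (forall x, f x = g x) -> FS f = FS g.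
Proof. by move=> e; rewrite /FS; congr fine; apply: eq_esum => x _; rewrite e. Qed.

Lemma integ_le (f g : T -> R) : (forall x, `|f x| <= `|g x|)%R -> integ g -> integ f.
Proof. by move=> fg; apply: fin_le => x; rewrite normr_ge0 fg. Qed.

Lemma integ_add (f g : T -> R) : integ f -> integ g -> integ (fun x => f x + g x).
Proof.
move=> ff fg; have [h _] := fin_add (fun x => normr_ge0 (f x)) (fun x => normr_ge0 (g x)) ff fg.
by apply: fin_le h => x; rewrite normr_ge0 ler_normD.
Qed.

Lemma integ_scale (c : R) (f : T -> R) : integ f -> integ (fun x => c * f x).
Proof.
move=> ff; have [h _] := fin_scale (normr_ge0 c) (fun x => normr_ge0 (f x)) ff.
by apply: fin_le h => x; rewrite normr_ge0 normrM lexx.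
Qed.

Lemma integ_const (c : R) : integ (fun _ => c).
Proof. exact: (fin_const (normr_ge0 c)).1. Qed.

Lemma fin_pos (f : T -> R) : integ f -> fin (fun x => posp (f x)).
Proof. by apply: fin_le => x; rewrite posp_ge0 posp_le_abs. Qed.
Lemma fin_neg (f : T -> R) : integ f -> fin (fun x => negp (f x)).
Proof. by apply: fin_le => x; rewrite negp_ge0 negp_le_abs. Qed.

Lemma Ex_split (f u v : T -> R) : (forall x, 0 <= u x)%R -> (forall x, 0 <= v x)%R ->
  fin u -> fin v -> (forall x, f x = u x - v x)%R -> Ex f = (FS u - FS v)%R.
Proof.
move=> u0 v0 fu fv e.
have ff : integ f.
  have [h _] := fin_add u0 v0 fu fv.
  apply: fin_le h => x; rewrite normr_ge0 e.
  by apply: le_trans (ler_normB _ _) _; rewrite !ger0_norm.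
have fp := fin_pos ff; have fn := fin_neg ff.
have [_ h1] := fin_add (fun x => posp_ge0 (f x)) v0 fp fv.
have [_ h2] := fin_add (fun x => negp_ge0 (f x)) u0 fn fu.
have E : FS (fun x => (posp (f x) + v x)%R) = FS (fun x => (negp (f x) + u x)%R).
  apply: FS_ext => x; have := pospE (f x); rewrite e; lra.
rewrite /Ex; move: E; rewrite h1 h2; lra.
Qed.

Lemma Ex_nonneg (f : T -> R) : (forall x, 0 <= f x)%R -> fin f -> Ex f = FS f.
Proof.
move=> f0 ff; have [f00 e0] := fin_const (lexx (0:R)).
by rewrite (Ex_split (u := f) (v := fun _ => 0%R)) // ?e0 ?subr0 // => x; rewrite subr0.
Qed.

Lemma ExD (f g : T -> R) : integ f -> integ g -> Ex (fun x => f x + g x) = (Ex f + Ex g)%R.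
Proof.
move=> ff fg.
have [a1 b1] := fin_add (fun x => posp_ge0 (f x)) (fun x => posp_ge0 (g x)) (fin_pos ff) (fin_pos fg).
have [a2 b2] := fin_add (fun x => negp_ge0 (f x)) (fun x => negp_ge0 (g x)) (fin_neg ff) (fin_neg fg).
rewrite (Ex_split _ _ a1 a2); last 3 first.
- by move=> x; rewrite addr_ge0 // posp_ge0.
- by move=> x; rewrite addr_ge0 // negp_ge0.
- by move=> x; have := pospE (f x); have := pospE (g x); lra.
by rewrite b1 b2 /Ex; lra.
Qed.

Lemma ExZ (c : R) (f : T -> R) : integ f -> Ex (fun x => c * f x) = (c * Ex f)%R.
Proof.
move=> ff; case: (lerP 0 c) => c0.
  have [a1 b1] := fin_scale c0 (fun x => posp_ge0 (f x)) (fin_pos ff).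
  have [a2 b2] := fin_scale c0 (fun x => negp_ge0 (f x)) (fin_neg ff).
  rewrite (Ex_split _ _ a1 a2); last 3 first.
  - by move=> x; rewrite mulr_ge0 // posp_ge0.
  - by move=> x; rewrite mulr_ge0 // negp_ge0.
  - by move=> x; rewrite -mulrBr pospE.
  by rewrite b1 b2 /Ex mulrBr.
have c0' : (0 <= - c)%R by rewrite oppr_ge0 ltW.
have [a1 b1] := fin_scale c0' (fun x => posp_ge0 (f x)) (fin_pos ff).
have [a2 b2] := fin_scale c0' (fun x => negp_ge0 (f x)) (fin_neg ff).
rewrite (Ex_split _ _ a2 a1); last 3 first.
- by move=> x; rewrite mulr_ge0 // negp_ge0.
- by move=> x; rewrite mulr_ge0 // posp_ge0.
- by move=> x; rewrite -mulrBr -opprB pospE mulrNN.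
by rewrite b1 b2 /Ex; lra.
Qed.

Lemma Ex_const (c : R) : Ex (fun _ => c) = c.
Proof.
case: (lerP 0 c) => c0.
  by rewrite Ex_nonneg //; [exact: (fin_const c0).2|exact: (fin_const c0).1].
have c0' : (0 <= - c)%R by rewrite oppr_ge0 ltW.
have [f0 e0] := fin_const (lexx (0:R)).
have [f1 e1] := fin_const c0'.
rewrite (Ex_split (u := fun _ => 0%R) (v := fun _ => - c)%R) // ?e0 ?e1 ?sub0r ?opprK //.
Qed.

Lemma Ex_le (f g : T -> R) : integ f -> integ g -> (forall x, f x <= g x)%R -> (Ex f <= Ex g)%R.
Proof.
move=> ff fg le.
have i1 : integ (fun x => (g x - f x)%R).
  by apply: integ_add => //; apply: (integ_le (g := f)) => // x; rewrite normrN.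
have e : Ex g = (Ex f + Ex (fun x => g x - f x))%R.
  by rewrite -ExD //; congr Ex; apply: funext => x; rewrite addrC subrK.
have h : (0 <= Ex (fun x => g x - f x))%R.
  rewrite Ex_nonneg; first by apply: FS_ge0 => x; rewrite subr_ge0.
    by move=> x; rewrite subr_ge0.
  by apply: fin_le i1 => x; rewrite subr_ge0 le /= ler_norm.
by rewrite e lerDl.
Qed.

Lemma FS_ext_supp (f g : T -> R) : (forall x, w x != 0 -> f x = g x)%R -> FS f = FS g.
Proof.
move=> e; rewrite /FS; congr fine; apply: eq_esum => x _.
by case: (eqVneq (w x) 0%R) => [->|/e ->]; rewrite ?mul0r.
Qed.

Lemma Ex_ext_supp (f g : T -> R) : (forall x, w x != 0 -> f x = g x)%R -> Ex f = Ex g.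
Proof.
by move=> e; rewrite /Ex (@FS_ext_supp (fun x => posp (f x)) (fun x => posp (g x)))
  ?(@FS_ext_supp (fun x => negp (f x)) (fun x => negp (g x))) // => x /e ->.
Qed.

Lemma Ex_le_supp (f g : T -> R) : integ f -> integ g ->
  (forall x, w x != 0 -> f x <= g x)%R -> (Ex f <= Ex g)%R.
Proof.
move=> ff fg le.
pose f' x := if w x == 0%R then g x else f x.
have -> : Ex f = Ex f' by apply: Ex_ext_supp => x /negPf; rewrite /f' => ->.
apply: Ex_le => //.
  have [h _] := fin_add (fun x => normr_ge0 (f x)) (fun x => normr_ge0 (g x)) ff fg.
  apply: fin_le h => x; rewrite normr_ge0 /f' /=.
  by case: ifP => _; rewrite ?lerDr ?lerDl.
by move=> x; rewrite /f'; case: ifP => [_|/negbT /le].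
Qed.

Lemma integ_le_supp (f g : T -> R) : (forall x, w x != 0 -> `|f x| <= `|g x|)%R -> integ g -> integ f.
Proof.
move=> fg; rewrite /integ /fin; apply: le_lt_trans; apply: le_esum => x _.
rewrite lee_fin; case: (eqVneq (w x) 0%R) => [->|/fg h]; first by rewrite !mul0r.
by rewrite ler_wpM2l.
Qed.

Lemma integ_fin (f : T -> R) : (forall x, 0 <= f x)%R -> integ f -> fin f.
Proof. by move=> f0; apply: fin_le => x; rewrite f0 /= ger0_norm. Qed.

Lemma fin_integ (f : T -> R) : (forall x, 0 <= f x)%R -> fin f -> integ f.
Proof.
move=> f0 ff; rewrite /integ /fin; apply: le_lt_trans ff; apply: le_esum => x _.
by rewrite lee_fin ger0_norm.
Qed.

Lemma FS_point (f : T -> R) (t : T) : (forall x, 0 <= f x)%R -> fin f -> (w t * f t <= FS f)%R.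
Proof.
move=> f0 ff; rewrite -lee_fin -FS_esum //.
have h := @fsum_le_esum R T setT [set t] (fun x => (w x * f x)%:E) (finite_set1 t) (subsetT _).
by rewrite fsbig_set1 in h.
Qed.

Definition ind (X : set T) (b : T) : R := if b \in X then 1%R else 0%R.

Lemma fin_ind (X : set T) (f : T -> R) : finite_set X -> (forall x, 0 <= f x)%R ->
  fin (fun b => f b * ind X b).
Proof.
move=> fX f0; rewrite /fin.
have -> : (\esum_(x in setT) (w x * (f x * ind X x))%:E = \esum_(x in X) (w x * f x)%:E)%E.
  rewrite [RHS]esum_mkcond; apply: eq_esum => x _; rewrite /ind.
  by case: (x \in X); rewrite ?mulr1 ?mulr0.
by rewrite esum_fset // ?fsumEFin // ?ltry // => x _; rewrite lee_fin mulr_ge0.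
Qed.

Lemma tail (u : T -> R) (e : R) : (forall x, 0 <= u x)%R -> fin u -> (0 < e)%R ->
  exists X, finite_set X /\ (FS (fun b => u b * (1 - ind X b)) <= e)%R.
Proof.
move=> u0 fu e0.
have : ((FS u - e)%:E < \esum_(x in setT) (w x * u x)%:E)%E.
  by rewrite FS_esum // lte_fin; lra.
move=> /ereal_sup_gt [_ [X [fX _] <-]] lt.
exists X; split => //.
have i0 : forall x, (0 <= ind X x)%R by move=> x; rewrite /ind; case: ifP.
have i1 : forall x, (0 <= 1 - ind X x)%R by move=> x; rewrite /ind; case: ifP => _; lra.
have f1 := fin_ind fX u0.
have f2 : fin (fun b => u b * (1 - ind X b)).
  by apply: fin_le fu => x; rewrite mulr_ge0 //= ler_piMr // /ind; case: ifP => _; lra.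
have [_ e1] := fin_add (fun x => mulr_ge0 (u0 x) (i0 x)) (fun x => mulr_ge0 (u0 x) (i1 x)) f1 f2.
have e2 : FS (fun x => u x * ind X x + u x * (1 - ind X x)) = FS u.
  by apply: FS_ext => x; rewrite -mulrDr addrC subrK mulr1.
have e3 : (\sum_(x \in X) (w x * u x)%:E = (FS (fun b => u b * ind X b))%:E)%E.
  rewrite -FS_esum //; last by move=> x; apply: mulr_ge0.
  rewrite [RHS](_ : _ = \esum_(x in X) (w x * u x)%:E)%E.
    by rewrite esum_fset // => x _; rewrite lee_fin mulr_ge0.
  rewrite [RHS]esum_mkcond; apply: eq_esum => x _; rewrite /ind.
  by case: (x \in X); rewrite ?mulr1 ?mulr0.
move: lt; rewrite e3 lte_fin; move: e2; rewrite e1; lra.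
Qed.
End Expect.

Section Huber.
Variables (R : realType) (K : R).
Hypothesis K0 : 0 < K.

Definition hub (t : R) := if t < - K then - K * t - K ^+ 2 / 2 else if t <= K then t ^+ 2 / 2 else K * t - K ^+ 2 / 2.
Definition dhub (t : R) := if t < - K then - K else if t <= K then t else K.


Lemma hub_taylor a h : hub (a + h) <= hub a + dhub a * h + h ^+ 2 / 2.
Proof.
have Kp := K0.
rewrite /hub /dhub.
case: (ltrP a (-K)) => H1; [|case: (lerP a K) => H2];
case: (ltrP (a + h) (-K)) => H3; try case: (lerP (a + h) K) => H4; try lra; try nra.
Qed.

Lemma hub_lip a h : hub (a + h) <= hub a + K * `|h|.
Proof.
have Kp := K0.
rewrite /hub.
case: (lerP 0 h) => hh; [rewrite ger0_norm //|rewrite ltr0_norm //];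
case: (ltrP a (-K)) => H5; [|case: (lerP a K) => ?| |case: (lerP a K) => H6];
case: (ltrP (a + h) (-K)) => H7; try case: (lerP (a + h) K) => H8; try lra; nra.
Qed.

Lemma dhub_le a : `|dhub a| <= K.
Proof.
have Kp := K0.
rewrite /dhub; case: (ltrP a (-K)) => H9; [|case: (lerP a K) => H10].
- by rewrite normrN ger0_norm // ltW.
- by rewrite ler_norml; apply/andP; split.
- by rewrite ger0_norm // ltW.
Qed.

Lemma hub_taylor2 a h : hub (a + h) <= hub a + dhub a * h + 2 * K * `|h|.
Proof.
have Kp := K0.
have := hub_lip a h; have := dhub_le a.
have : - (dhub a * h) <= `|dhub a| * `|h| by rewrite -normrM -normrN ler_norm.
have := normr_ge0 h; nra.
Qed.

Lemma hub_ge t : K * `|t| - K ^+ 2 / 2 <= hub t.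
Proof.
have Kp := K0.
rewrite /hub; case: (lerP 0 t) => ht; [rewrite ger0_norm //|rewrite ltr0_norm //];
case: (ltrP t (-K)) => H11; try case: (lerP t K) => H12; try lra; nra.
Qed.

Lemma hub_ge0 t : 0 <= hub t.
Proof.
have Kp := K0.
rewrite /hub; case: (ltrP t (-K)) => H13; try case: (lerP t K) => H14; try lra; nra.
Qed.
End Huber.

Section Main.
Variables (R : realType) (k : fieldType) (A : absval k R) (p : 'M[k]_2 -> R).
Hypotheses (p0 : forall g, 0 <= p g) (p1 : (\esum_(g in setT) (p g)%:E = 1)%E)
  (pg : forall g, p g != 0 -> good g)
  (hl : integ p (ell A)) (g0 : 'M[k]_2) (pg0 : p g0 != 0)
  (sw0 : g0 ord0 ord_max != 0).
Local Notation M := 'M[k]_2.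

Lemma sgE (g : M) : sg R g = 1 \/ sg R g = -1.
Proof. by rewrite /sg; case: ifP; [left|right]. Qed.

Lemma integ_1sg : integ p (fun g => 1 - sg R g).
Proof.
apply: (@integ_le _ _ _ p0 _ (fun _ => 2)); last exact: (integ_const p0 p1).
by move=> x; case: (sgE x) => ->; rewrite ?subrr ?normr0 ?opprK ger0_norm //.
Qed.

Definition q2 := Ex p (fun g => 1 - sg R g).
Definition mm := Ex p (ell A).
Definition cc := mm / q2.
Definition xi (g : M) := ell A g + (- cc) * (1 - sg R g).
Definition Mv (g : M) := ell A g + cc * sg R g.

Lemma q2_gt0 : 0 < q2.
Proof.
have h0 : forall g : M, 0 <= 1 - sg R g by move=> g; case: (sgE g) => ->; lra.
have f1 := integ_fin p0 h0 integ_1sg.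
rewrite /q2 (Ex_nonneg p0 p1) //.
apply: lt_le_trans (FS_point p0 g0 h0 f1).
rewrite /sg (negPf sw0); apply: mulr_gt0; first by rewrite lt_def pg0 p0.
lra.
Qed.

Lemma integ_xi : integ p xi.
Proof. by apply: (integ_add p0) => //; apply: (integ_scale p0); exact: integ_1sg. Qed.

Lemma Ex_xi : Ex p xi = 0.
Proof.
rewrite /xi (ExD p0) //; last by apply: (integ_scale p0); exact: integ_1sg.
rewrite (ExZ p0); last exact: integ_1sg.
have := q2_gt0; rewrite -/q2 -/mm /cc => h.
by rewrite mulNr divfK ?subrr // gt_eqF.
Qed.

Lemma Mv_mul a b : good a -> good b -> Mv (a *m b) = Mv a + sg R a * xi b.
Proof.
move=> ga gb; rewrite /Mv /xi ell_mul // sg_mul //; ring.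
Qed.

Definition rho (K t : R) := if t ^+ 2 / 2 <= 2 * K * `|t| then t ^+ 2 / 2 else 2 * K * `|t|.

Lemma rho_ge0 K t : 0 < K -> 0 <= rho K t.
Proof.
move=> K0; rewrite /rho; have := normr_ge0 t; have := sqr_ge0 t.
case: ifP => _; nra.
Qed.

Lemma rho_le1 K t : rho K t <= t ^+ 2 / 2.
Proof. by rewrite /rho; case: ifP => // /negbT; rewrite -ltNge => /ltW. Qed.
Lemma rho_le2 K t : rho K t <= 2 * K * `|t|.
Proof. by rewrite /rho; case: ifP. Qed.

Lemma hub_rho K a h : 0 < K -> hub K (a + h) <= hub K a + dhub K a * h + rho K h.
Proof.
move=> K0; rewrite /rho; case: ifP => _; [exact: hub_taylor|exact: hub_taylor2].
Qed.

Definition delta K := Ex p (fun b => rho K (xi b)).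

Lemma integ_rho K : 0 < K -> integ p (fun b => rho K (xi b)).
Proof.
move=> K0; apply: (@integ_le _ _ _ p0 _ (fun b => (2 * K) * xi b)).
  move=> x; rewrite ger0_norm ?rho_ge0 // normrM (ger0_norm (x := 2 * K)).
    exact: rho_le2.
  have := K0; lra.
by apply: (integ_scale p0); exact: integ_xi.
Qed.

Lemma delta_ge0 K : 0 < K -> 0 <= delta K.
Proof.
move=> K0; rewrite /delta (Ex_nonneg p0 p1); first by apply: (FS_ge0 p0) => x; exact: rho_ge0.
  by move=> x; exact: rho_ge0.
by apply: (integ_fin p0); [move=> x; exact: rho_ge0|exact: integ_rho].
Qed.

Lemma step K a : 0 < K -> good a ->
  integ p (fun b => hub K (Mv (a *m b))) /\
  Ex p (fun b => hub K (Mv (a *m b))) <= hub K (Mv a) + delta K.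
Proof.
move=> K0 ga.
pose G := fun b => (hub K (Mv a) + (dhub K (Mv a) * sg R a) * xi b) + rho K (xi b).
have iG : integ p G.
  apply: (integ_add p0); last exact: integ_rho.
  apply: (integ_add p0); first exact: (integ_const p0 p1).
  by apply: (integ_scale p0); exact: integ_xi.
have le : forall b, p b != 0 -> hub K (Mv (a *m b)) <= G b.
  move=> b pb; rewrite (Mv_mul ga (pg pb)) /G.
  apply: le_trans (hub_rho _ _ K0) _.
  have -> : rho K (sg R a * xi b) = rho K (xi b).
    by rewrite /rho normrM exprMn; case: (sgE a) => ->; rewrite ?normrN normr1 ?mul1r ?sqrrN expr1n mul1r.
  by rewrite mulrA.
have iF : integ p (fun b => hub K (Mv (a *m b))).
  apply: (integ_le_supp p0 _ iG) => y py.
  rewrite (ger0_norm (hub_ge0 K0 _)) (ger0_norm (x := G y)); first exact: le.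
  exact: le_trans (hub_ge0 K0 _) (le y py).
split => //.
apply: le_trans (Ex_le_supp p0 p1 iF iG le) _.
have ix := integ_xi.
rewrite /G (ExD p0); last exact: integ_rho; last first.
  by apply: (integ_add p0); [exact: (integ_const p0 p1)|exact: (integ_scale p0)].
rewrite (ExD p0) ?(integ_const p0 p1) ?(integ_scale p0) //.
by rewrite (ExZ p0) // Ex_xi mulr0 addr0 (Ex_const p0 p1).
Qed.

Lemma Mv1 : Mv 1%:M = cc.
Proof. by rewrite /Mv ell1 sg1 add0r mulr1. Qed.

Lemma W_bound K n : 0 < K ->
  (\esum_(g in setT) (convpow p n g * hub K (Mv g))%:E <= (hub K cc + n%:R * delta K)%:E)%E.
Proof.
move=> K0; have hg0 := hub_ge0 K0.
have d0 := delta_ge0 K0.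
elim: n => [|n IH].
  rewrite (esum_one (t := 1%:M)) /= ?eqxx.
  - by rewrite lee_fin Mv1; lra.
  - by move=> x /negPf ->; congr (_%:E); lra.
  - by rewrite lee_fin; have := hg0 (Mv 1%:M); lra.
have [P0 [P1 Pg]] := convpow_inv p0 p1 pg n.
rewrite /= (@conv_eq _ _ _ _ (fun g => hub K (Mv g)) P0 p0 (fun g => hg0 _) P1 p1).
apply: (@le_trans _ _ (\esum_(a in setT) (convpow p n a * (hub K (Mv a) + delta K))%:E)%E).
  apply: le_esum => a _.
  case: (eqVneq (convpow p n a) 0) => [->|Pa].
    by rewrite mul0r esum1 // => b _; rewrite !mul0r.
  have [iF leF] := step K0 (Pg a Pa).
  have fF := integ_fin p0 (fun b => hg0 _) iF.
  under eq_esum do rewrite -mulrA EFinM.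
  rewrite esumZ //; last by move=> b _; rewrite lee_fin mulr_ge0.
  rewrite (FS_esum p0 (fun b => hg0 _) fF) -(Ex_nonneg p0 p1 (fun b => hg0 _) fF).
  by rewrite EFinM lee_wpmul2l // lee_fin.
under eq_esum do rewrite mulrDr EFinD.
rewrite esumD; last 2 first.
  by move=> a _; rewrite lee_fin mulr_ge0.
  by move=> a _; rewrite lee_fin mulr_ge0.
under [X in (_ + X)%E]eq_esum do rewrite EFinM.
rewrite esumZr ?P1 ?mul1e //; last by move=> a _; rewrite lee_fin.
apply: le_trans (leeD IH (lexx _)) _.
by rewrite -EFinD lee_fin -addrA lerD // -addn1 natrD mulrDl mul1r.
Qed.

Lemma I_nonneg n : (0 <= int_lognorm A (convpow p n))%E.
Proof.
have [P0 [P1 Pg]] := convpow_inv p0 p1 pg n.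
apply: esum_ge0 => g _; rewrite lee_fin.
case: (eqVneq (convpow p n g) 0) => [->|Pa]; first by rewrite mul0r.
rewrite (ln_opnorm A (Pg _ Pa)); apply: mulr_ge0 => //; exact: normr_ge0.
Qed.

Lemma I_bound K n : 0 < K ->
  (int_lognorm A (convpow p n) <= ((hub K cc + n%:R * delta K) / K + (K / 2 + `|cc|))%:E)%E.
Proof.
move=> K0; have hg0 := hub_ge0 K0.
have [P0 [P1 Pg]] := convpow_inv p0 p1 pg n.
rewrite /int_lognorm.
apply: (@le_trans _ _ (\esum_(g in setT) (convpow p n g * (hub K (Mv g) / K + (K / 2 + `|cc|)))%:E)%E).
  apply: le_esum => g _; rewrite lee_fin.
  case: (eqVneq (convpow p n g) 0) => [->|Pa]; first by rewrite !mul0r.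
  rewrite (ln_opnorm A (Pg _ Pa)); apply: ler_wpM2l => //.
  have e1 : ell A g = Mv g - cc * sg R g by rewrite /Mv; ring.
  have e2 : `|cc * sg R g| = `|cc| by rewrite normrM; case: (sgE g) => ->; rewrite ?normrN normr1 mulr1.
  have h1 : `|ell A g| <= `|Mv g| + `|cc| by rewrite e1 -e2; exact: ler_normB.
  have h2 : `|Mv g| <= hub K (Mv g) / K + K / 2.
    have h3 := hub_ge K0 (Mv g).
    rewrite -(@ler_pM2l _ K) // mulrDr mulrCA divff ?gt_eqF // mulr1.
    have : K * (K / 2) = K ^+ 2 / 2 by rewrite expr2 mulrA.
    lra.
  lra.
under eq_esum do rewrite mulrDr EFinD.
rewrite esumD; last 2 first.
  by move=> a _; rewrite lee_fin mulr_ge0 // divr_ge0 // ltW.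
  by move=> a _; rewrite lee_fin mulr_ge0 // addr_ge0 // divr_ge0 // ltW.
under [X in (_ + X)%E]eq_esum do rewrite EFinM.
rewrite esumZr; [|by rewrite addr_ge0 // divr_ge0 // ltW|by move=> a _; rewrite lee_fin].
rewrite P1 mul1e [X in (_ <= X)%E]EFinD leeD //.
under eq_esum do rewrite mulrA EFinM.
rewrite esumZr //; last by move=> a _; rewrite lee_fin mulr_ge0.
rewrite EFinM; apply: lee_wpmul2r; first by rewrite lee_fin invr_ge0 ltW.
exact: W_bound.
by rewrite invr_ge0 ltW.
Qed.


Lemma delta_small e : 0 < e -> exists K, 0 < K /\ delta K <= e * K.
Proof.
move=> e0; have e4 : 0 < e / 4 by rewrite divr_gt0.
have [X [fX hX]] := tail p0 (fun b => normr_ge0 (xi b)) integ_xi e4.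
pose F1 b := xi b ^+ 2 / 2 * ind R X b.
pose F2 b := `|xi b| * (1 - ind R X b).
have i0 : forall x, (0 <= ind R X x) /\ (ind R X x = 0 \/ ind R X x = 1).
  by move=> x; rewrite /ind; case: ifP => _; split; [|right| |left].
have F10 : forall b, 0 <= F1 b.
  move=> b; apply: mulr_ge0; [apply: divr_ge0 => //; exact: sqr_ge0|exact: (i0 b).1].
have F20 : forall b, 0 <= F2 b.
  move=> b; apply: mulr_ge0 => //; case: (i0 b) => _ [] ->; lra.
have fF1 : fin p F1.
  by apply: (fin_ind p0) => // b; apply: divr_ge0 => //; exact: sqr_ge0.
have fF2 : fin p F2.
  apply: (@fin_le _ _ p p0 F2 (fun b => `|xi b|)); last exact: integ_xi.
  move=> b; apply/andP; split; first exact: F20.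
  by rewrite /F2; case: (i0 b) => _ [] ->; rewrite ?subr0 ?mulr1 ?subrr ?mulr0.
set C := FS p F1.
have C0 : 0 <= C by apply: (FS_ge0 p0).
pose K := 1 + 2 * C / e.
have K0 : 0 < K.
  have : 0 <= 2 * C / e by apply: divr_ge0; [apply: mulr_ge0|apply: ltW].
  rewrite /K; lra.
exists K; split => //.
have iF1 := fin_integ F10 fF1.
have iF2 := fin_integ F20 fF2.
have le : forall b, rho K (xi b) <= F1 b + (2 * K) * F2 b.
  move=> b; rewrite /F1 /F2.
  have h1 := rho_le1 K (xi b); have h2 := rho_le2 K (xi b).
  case: (i0 b) => _ [] ->.
    rewrite mulr0 add0r subr0 mulr1; lra.
  rewrite mulr1 subrr !mulr0 addr0; lra.
have := Ex_le p0 p1 (integ_rho K0) (integ_add p0 iF1 (integ_scale p0 (2 * K) iF2)) le.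
rewrite (ExD p0) //; last exact: integ_scale.
rewrite (ExZ p0) // (Ex_nonneg p0 p1 F10 fF1) (Ex_nonneg p0 p1 F20 fF2) -/C -/(delta K) => h.
have eK : e * K = e + 2 * C by rewrite /K; field; rewrite gt_eqF.
have := hX; rewrite -/F2 => hX'.
have : 2 * K * FS p F2 <= 2 * K * (e / 4) by rewrite ler_wpM2l // mulr_ge0 // ltW.
have : 2 * K * (e / 4) = (e * K) / 2 by rewrite mulrC mulrA; field.
lra.
Qed.

End Main.

Unset Implicit Arguments.

Theorem proposition5p3 (R : realType) (k : fieldType) (A : absval k R)
  (Acompl : av_complete A) (p : 'M[k]_2 -> R)
  (hp : discrete_prob p)
  (hSL : forall g, p g != 0 -> \det g = 1)
  (hint : (int_lognorm A p < +oo)%E)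
  (hinv : forall g, p g != 0 -> leaves_0inf g)
  (hswap : exists g, p g != 0 /\ swaps_0inf g) :
  (fun n : nat => ((n%:R)^-1)%:E * int_lognorm A (convpow p n))%E
    @ \oo --> (0 : \bar R)%E.
Proof.
case: hp => p0 _ p1.
have pg : forall g, p g != 0 -> good g := fun g h => good_of (hSL g h) (hinv g h).
have hl : integ p (ell A).
  rewrite /integ /fin; move: hint; rewrite /int_lognorm.
  suff -> : (\esum_(g in setT) (p g * ln (opnorm A g))%:E =
             \esum_(g in setT) (p g * `|ell A g|)%:E)%E by [].
  apply: eq_esum => g _.
  case: (eqVneq (p g) 0) => [->|pg']; first by rewrite !mul0r.
  by rewrite (ln_opnorm A (pg _ pg')).
have [g0 [pg0 sw]] := hswap.
have sw0 := swap_entry (pg _ pg0) sw.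
set I := fun n => int_lognorm A (convpow p n).
have I0 n : (0 <= I n)%E := I_nonneg A p0 p1 pg n.
have Ifin n : I n \is a fin_num.
  rewrite ge0_fin_numE //; apply: le_lt_trans (I_bound p0 p1 pg hl pg0 sw0 n ltr01) _.
  exact: ltry.
apply: (@cvg_EFin _ _ _ _ _ 0%R).
  by apply: filterE => n; rewrite fin_numM //; exact: Ifin.
apply/cvgrPdist_le => e e0.
have e2 : 0 < e / 2 by rewrite divr_gt0.
have [K [K0 dK]] := delta_small p0 p1 hl e2.
set B := hub K (cc A p) / K + (K / 2 + `|cc A p|).
have B0 : 0 <= B.
  rewrite /B; apply: addr_ge0; first by apply: divr_ge0; [exact: (hub_ge0 K0)|exact: ltW].
  by apply: addr_ge0; [apply: divr_ge0; [exact: ltW|]|].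
set N := (Num.truncn (B / (e / 2))).+1.
near=> n.
rewrite /= fineM //; last exact: Ifin.
rewrite /= sub0r normrN.
set y := fine (int_lognorm A (convpow p n)).
have y0 : 0 <= y by apply: fine_ge0; exact: I0.
have yE : int_lognorm A (convpow p n) = y%:E by rewrite fineK //; exact: Ifin.
have h1 := I_bound p0 p1 pg hl pg0 sw0 n K0.
rewrite yE lee_fin in h1.
have nN : (N <= n)%N by near: n; exists N.
have nbig : B / (e / 2) < n%:R.
  apply: lt_le_trans (truncnS_gt _) _; by rewrite ler_nat.
have npos : 0 < n%:R :> R by apply: le_lt_trans nbig; apply: divr_ge0 => //; exact: ltW.
have h3 : B < n%:R * (e / 2) by rewrite -ltr_pdivrMr.
have h2 : delta A p K / K <= e / 2 by rewrite ler_pdivrMr.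
have h4 : (hub K (cc A p) + n%:R * delta A p K) / K = hub K (cc A p) / K + n%:R * (delta A p K / K).
  by rewrite mulrDl mulrA.
have h5 : n%:R * (delta A p K / K) <= n%:R * (e / 2) by rewrite ler_wpM2l // ltW.
rewrite ger0_norm; last by apply: mulr_ge0 => //; rewrite invr_ge0 ltW.
rewrite mulrC ler_pdivrMr //.
move: h1; rewrite h4 -/B => h1.
have -> : e * n%:R = n%:R * (e / 2) + n%:R * (e / 2) by field.
have : y <= B + n%:R * (delta A p K / K) by move: h1; rewrite /B; lra.
lra.
Unshelve. all: by end_near.
Qed.
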